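(* Let $p\ge1$. Every two-agent randomized mechanism that is strategyproof, shift and scale invariant, symmetric, and satisfies $\mathbb{P}(f({\bf x})\in[\min(x_1,x_2),\max(x_1,x_2)])=1$ for every profile ${\bf x}$ has approximation ratio at least $\tfrac12\big(2^{1-\frac1p}+1\big)$ with respect to the $L_p$ social cost.
   Context: Two-agent randomized mechanisms map profiles ${\bf x}=(x_1,x_2)$ to distributions on $\mathbb{R}$ (identified with random variables); agent cost is expected distance to the facility; strategyproof means no agent can reduce his expected cost by misreporting. Social cost $sc({\bf x},\pi)=\mathbb{E}_{y\sim\pi}(|x_1-y|^p+|x_2-y|^p)^{1/p}$; approximation ratio $\sup_{\bf x}sc({\bf x},f({\bf x}))/\min_y sc({\bf x},y)$ (with $0/0=1$, $c/0=\infty$ for $c>0$). $m_{\bf x}=(x_1+x_2)/2$. $f$ is shift and scale invariant if for every profile with $x_1\le x_2$ and every $c\in\mathbb{R}$: (1) $f(x_1+c,x_2+c)$ is distributed as $f({\bf x})+c$; (2) if $c\ge0$, $f(cx_1,cx_2)$ is distributed as $c\,f({\bf x})$, and if $c<0$, $f(cx_1,cx_2)$ is distributed as $-c\,f(-x_2,-x_1)$. $f$ is symmetric if $\mathbb{P}(f({\bf x})\ge m_{\bf x}+y)=\mathbb{P}(f({\bf x})\le m_{\bf x}-y)$ for all profiles and all $y\in\mathbb{R}$. *)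

(* Defs.v *)
From Stdlib Require Import Reals Lra ClassicalEpsilon.
Open Scope R_scope.

(* A probability distribution on R with bounded support, represented by its
   quantile function Q : [0,1] -> R (nondecreasing): the distribution is the
   law of Q(U) with U uniform on [0,1]. *)
Record dist := Dist {
  qf : R -> R;
  qf_mono : forall u v, 0 <= u -> u <= v -> v <= 1 -> qf u <= qf v
}.

(* Riemann integral over [0,1] (defaults to 0 if not Riemann integrable;
   all integrands used below are integrable). *)
Definition Rint01 (h : R -> R) : R :=
  epsilon (inhabits 0)
    (fun I => exists pr : Riemann_integrable h 0 1, RiemannInt pr = I).

Definition Expect (d : dist) (g : R -> R) : R :=
  Rint01 (fun u => g (qf d u)).

Definition Prob (d : dist) (P : R -> Prop) : R :=
  Expect d (fun y => if excluded_middle_informative (P y) then 1 else 0).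

Definition mechanism := R -> R -> dist.

Definition agent_cost (xi : R) (d : dist) : R := Expect d (fun y => Rabs (xi - y)).

Definition strategyproof (f : mechanism) : Prop :=
  (forall x1 x2 x1', agent_cost x1 (f x1 x2) <= agent_cost x1 (f x1' x2)) /\
  (forall x1 x2 x2', agent_cost x2 (f x1 x2) <= agent_cost x2 (f x1 x2')).

Definition distributed_as (d1 : dist) (h : R -> R) (d2 : dist) : Prop :=
  forall t, Prob d1 (fun y => y <= t) = Prob d2 (fun y => h y <= t).

Definition shift_scale_invariant (f : mechanism) : Prop :=
  forall x1 x2 c, x1 <= x2 ->
    distributed_as (f (x1 + c) (x2 + c)) (fun y => y + c) (f x1 x2) /\
    (0 <= c -> distributed_as (f (c * x1) (c * x2)) (fun y => c * y) (f x1 x2)) /\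
    (c < 0 -> distributed_as (f (c * x1) (c * x2)) (fun y => - c * y) (f (- x2) (- x1))).

Definition symmetric (f : mechanism) : Prop :=
  forall x1 x2 y,
    Prob (f x1 x2) (fun z => (x1 + x2) / 2 + y <= z) =
    Prob (f x1 x2) (fun z => z <= (x1 + x2) / 2 - y).

(* a^b for a >= 0, with 0^b = 0 (b > 0 here). *)
Definition rpow (a b : R) : R := if Rle_dec a 0 then 0 else Rpower a b.

Definition lpnorm (p a b : R) : R :=
  rpow (rpow (Rabs a) p + rpow (Rabs b) p) (1 / p).

Definition sc_det (p x1 x2 y : R) : R := lpnorm p (x1 - y) (x2 - y).

Definition sc (p x1 x2 : R) (d : dist) : R := Expect d (fun y => sc_det p x1 x2 y).

(* Optimal social cost min_y sc(x,y) (the minimum is attained). *)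
Definition opt (p x1 x2 : R) : R :=
  epsilon (inhabits 0)
    (fun m => (exists y, sc_det p x1 x2 y = m) /\ forall z, m <= sc_det p x1 x2 z).

(* "ratio at profile x exceeds c'" with conventions 0/0 = 1, c/0 = +oo. *)
Definition ratio_exceeds (p : R) (f : mechanism) (x1 x2 c' : R) : Prop :=
  let s := sc p x1 x2 (f x1 x2) in
  let o := opt p x1 x2 in
  if Req_dec_T o 0 then (if Req_dec_T s 0 then 1 > c' else True)
  else s / o > c'.

Definition approx_ratio_ge (p : R) (f : mechanism) (c : R) : Prop :=
  forall c', c' < c -> exists x1 x2, ratio_exceeds p f x1 x2 c'.

(* Main.v *)
From Stdlib Require Import Reals.
From Stdlib Require Import Lra Lia RList ClassicalEpsilon FunctionalExtensionality.
Require Import Defs.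
Open Scope R_scope.


Lemma adapted_ext (f g : R -> R) a b l lf :
  adapted_couple f a b l lf ->
  (forall t, Rmin a b < t < Rmax a b -> f t = g t) ->
  adapted_couple g a b l lf.
Proof.
  intros [Ho [H0 [H1 [H2 H3]]]] Heq.
  repeat split; auto.
  intros i Hi x Hx. rewrite <- Heq. apply (H3 i Hi x Hx).
  destruct Hx as [Hx1 Hx2].
  pose proof (proj1 (RList_P6 l) Ho) as Hm.
  split.
  - rewrite <- H0. apply Rle_lt_trans with (pos_Rl l i); auto.
    apply Hm; lia.
  - rewrite <- H1. apply Rlt_le_trans with (pos_Rl l (S i)); auto.
    apply Hm; lia.
Qed.

Definition isf_ext (f g : R -> R) a b (pr : IsStepFun f a b)
  (H : forall t, Rmin a b < t < Rmax a b -> f t = g t) : IsStepFun g a b :=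
  existT _ (projT1 pr)
   (existT _ (projT1 (projT2 pr)) (adapted_ext f g a b _ _ (projT2 (projT2 pr)) H)).

Lemma isf_ext_int (f g : R -> R) a b (pr : IsStepFun f a b) H :
  RiemannInt_SF (mkStepFun (isf_ext f g a b pr H)) = RiemannInt_SF (mkStepFun pr).
Proof.
  unfold RiemannInt_SF, subdivision_val, subdivision. simpl.
  destruct pr as [l [lf Hl]]. simpl. reflexivity.
Qed.

Lemma glue (a m b : R) (Ham : a <= m) (Hmb : m <= b) (f1 : StepFun a m) (f2 : StepFun m b) :
  { g : StepFun a b | (forall t, t <= m -> g t = f1 t) /\ (forall t, m < t -> g t = f2 t) /\
     RiemannInt_SF g = RiemannInt_SF f1 + RiemannInt_SF f2 }.
Proof.
  set (gf := fun t => if Rle_dec t m then f1 t else f2 t).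
  assert (E1 : forall t, Rmin a m < t < Rmax a m -> f1 t = gf t).
  { intros t Ht. unfold gf. rewrite Rmax_right in Ht by lra.
    destruct (Rle_dec t m); [reflexivity | lra]. }
  assert (E2 : forall t, Rmin m b < t < Rmax m b -> f2 t = gf t).
  { intros t Ht. unfold gf. rewrite Rmin_left in Ht by lra.
    destruct (Rle_dec t m); [lra | reflexivity]. }
  set (pr1 := isf_ext _ _ _ _ (pre f1) E1).
  set (pr2 := isf_ext _ _ _ _ (pre f2) E2).
  set (pr3 := @StepFun_P41 gf a m b Ham Hmb pr1 pr2).
  exists (mkStepFun pr3). simpl. split; [|split].
  - intros t Ht. unfold gf. destruct (Rle_dec t m); [reflexivity|lra].
  - intros t Ht. unfold gf. destruct (Rle_dec t m); [lra|reflexivity].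
  - rewrite <- (@StepFun_P43 gf a m b pr1 pr2 pr3).
    unfold pr1, pr2. rewrite !isf_ext_int.
    destruct f1, f2; reflexivity.
Qed.

Definition nondecr (h : R -> R) a b := forall x y, a <= x -> x <= y -> y <= b -> h x <= h y.

Lemma mono_approx (n : nat) : forall a b (h : R -> R), a <= b -> nondecr h a b ->
  { phi : StepFun a b & { psi : StepFun a b |
    (forall t, a <= t <= b -> Rabs (h t - phi t) <= psi t) /\
    RiemannInt_SF psi <= (b - a) * (h b - h a) / 2 ^ n } }.
Proof.
  induction n as [|n IH]; intros a b h Hab Hh.
  - exists (mkStepFun (StepFun_P4 a b (h a))).
    exists (mkStepFun (StepFun_P4 a b (h b - h a))).
    split.
    + intros t Ht. simpl. unfold fct_cte.
      assert (h a <= h t) by (apply Hh; lra).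
      assert (h t <= h b) by (apply Hh; lra).
      rewrite Rabs_right; lra.
    + rewrite StepFun_P18. simpl. right; field.
  - set (m := (a + b) / 2).
    assert (Ham : a <= m) by (unfold m; lra).
    assert (Hmb : m <= b) by (unfold m; lra).
    destruct (IH a m h Ham (fun x y H1 H2 H3 => Hh x y H1 H2 ltac:(lra))) as [phi1 [psi1 [P1 I1]]].
    destruct (IH m b h Hmb (fun x y H1 H2 H3 => Hh x y ltac:(lra) H2 H3)) as [phi2 [psi2 [P2 I2]]].
    destruct (glue a m b Ham Hmb phi1 phi2) as [phi [Ph1 [Ph2 _]]].
    destruct (glue a m b Ham Hmb psi1 psi2) as [psi [Ps1 [Ps2 Ps3]]].
    exists phi, psi. split.
    + intros t Ht. destruct (Rle_dec t m).
      * rewrite Ph1, Ps1 by lra. apply P1; lra.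
      * rewrite Ph2, Ps2 by lra. apply P2; lra.
    + rewrite Ps3.
      assert (E : (b - a) * (h b - h a) / 2 ^ S n =
                  (m - a) * (h m - h a) / 2 ^ n + (b - m) * (h b - h m) / 2 ^ n).
      { unfold m. simpl. field. apply pow_nonzero. lra. }
      rewrite E. lra.
Qed.

Lemma INR_le_pow2 n : INR n <= 2 ^ n.
Proof.
  induction n. simpl; lra. rewrite S_INR. simpl.
  assert (1 <= 2 ^ n) by (apply pow_R1_Rle; lra). lra.
Qed.

Lemma mono_int a b h : a <= b -> nondecr h a b -> Riemann_integrable h a b.
Proof.
  intros Hab Hh eps.
  set (K := (b - a) * (h b - h a)).
  assert (HK : 0 <= K) by (unfold K; apply Rmult_le_pos; [lra| assert (h a <= h b) by (apply Hh; lra); lra]).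
  assert (Ex : exists n : nat, INR n * eps > K) by (apply INR_archimed; destruct eps; simpl; lra).
  apply constructive_indefinite_description in Ex. destruct Ex as [n Hn].
  destruct (mono_approx n a b h Hab Hh) as [phi [psi [P I]]].
  exists phi, psi. split.
  - intros t Ht. rewrite Rmin_left, Rmax_right in Ht by lra. apply P; lra.
  - assert (0 <= RiemannInt_SF psi).
    { rewrite <- (Rmult_0_l (b - a)). rewrite <- (StepFun_P18 a b 0).
      apply StepFun_P37; auto. intros x Hx. simpl. unfold fct_cte.
      apply Rle_trans with (Rabs (h x - phi x)); [apply Rabs_pos| apply P; lra]. }
    rewrite Rabs_right by lra.
    assert (Hp : 0 < 2 ^ n) by (apply pow_lt; lra).
    assert (K / 2 ^ n < eps).
    { apply Rmult_lt_reg_r with (2 ^ n); auto. unfold Rdiv. rewrite Rmult_assoc, Rinv_l, Rmult_1_r by lra.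
      pose proof (INR_le_pow2 n). destruct eps as [e He]; simpl in *. nra. }
    unfold K in *. lra.
Qed.

Lemma anti_int a b h : a <= b -> nondecr (fun x => - h x) a b -> Riemann_integrable h a b.
Proof.
  intros Hab Hh. apply Riemann_integrable_ext with (fun x => - - h x).
  intros; ring. apply Riemann_integrable_Ropp. apply mono_int; auto.
Qed.

Definition RI (g : R -> R) := Riemann_integrable g 0 1.

Lemma Rint01_spec g (pr : RI g) : Rint01 g = RiemannInt pr.
Proof.
  unfold Rint01.
  destruct (epsilon_spec (inhabits 0)
    (fun I => exists pr : Riemann_integrable g 0 1, RiemannInt pr = I)
    (ex_intro _ (RiemannInt pr) (ex_intro _ pr eq_refl))) as [pr' E].
  rewrite <- E. apply RiemannInt_P5.
Qed.

Lemma RI_lin g1 g2 l : RI g1 -> RI g2 -> RI (fun u => g1 u + l * g2 u).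
Proof. intros; apply RiemannInt_P10; auto. Qed.

Lemma Rint01_lin g1 g2 l : RI g1 -> RI g2 ->
  Rint01 (fun u => g1 u + l * g2 u) = Rint01 g1 + l * Rint01 g2.
Proof.
  intros p1 p2. rewrite (Rint01_spec _ (RI_lin _ _ l p1 p2)), (Rint01_spec _ p1), (Rint01_spec _ p2).
  apply RiemannInt_P13.
Qed.

Lemma Rint01_le g1 g2 : RI g1 -> RI g2 -> (forall u, 0 < u < 1 -> g1 u <= g2 u) ->
  Rint01 g1 <= Rint01 g2.
Proof.
  intros p1 p2 H. rewrite (Rint01_spec _ p1), (Rint01_spec _ p2).
  apply RiemannInt_P19; auto; lra.
Qed.

Lemma RI_const c : RI (fun _ => c).
Proof. exact (RiemannInt_P14 0 1 c). Qed.

Lemma Rint01_const c : Rint01 (fun _ => c) = c.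
Proof.
  change (Rint01 (fct_cte c) = c).
  rewrite (Rint01_spec _ (RiemannInt_P14 0 1 c)).
  rewrite (RiemannInt_P15 (RiemannInt_P14 0 1 c)). ring.
Qed.

Lemma RI_ext g1 g2 : RI g1 -> (forall u, g1 u = g2 u) -> RI g2.
Proof. intros p H. apply Riemann_integrable_ext with g1; auto. Qed.

Lemma Rint01_ext g1 g2 : (forall u, g1 u = g2 u) -> Rint01 g1 = Rint01 g2.
Proof.
  intros H. assert (g1 = g2) by (extensionality u; apply H). subst; reflexivity.
Qed.

Lemma int_lb g a b A (pr : Riemann_integrable g a b) : a <= b ->
  (forall x, a < x < b -> A <= g x) -> A * (b - a) <= RiemannInt pr.
Proof.
  intros H1 H2. rewrite <- (RiemannInt_P15 (RiemannInt_P14 a b A)).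
  apply RiemannInt_P19; auto.
Qed.

Lemma int_ub g a b A (pr : Riemann_integrable g a b) : a <= b ->
  (forall x, a < x < b -> g x <= A) -> RiemannInt pr <= A * (b - a).
Proof.
  intros H1 H2. rewrite <- (RiemannInt_P15 (RiemannInt_P14 a b A)).
  apply RiemannInt_P19; auto.
Qed.

Lemma Rint01_3 g a b A B C : RI g -> 0 <= a -> a <= b -> b <= 1 ->
  (forall u, 0 < u < a -> A <= g u) -> (forall u, a < u < b -> B <= g u) ->
  (forall u, b < u < 1 -> C <= g u) ->
  A * a + B * (b - a) + C * (1 - b) <= Rint01 g.
Proof.
  intros p Ha Hab Hb H1 H2 H3.
  rewrite (Rint01_spec _ p).
  pose (p0b := RiemannInt_P22 p (conj (Rle_trans _ _ _ Ha Hab) Hb)).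
  pose (pb1 := RiemannInt_P23 p (conj (Rle_trans _ _ _ Ha Hab) Hb)).
  pose (p0a := RiemannInt_P22 p0b (conj Ha Hab)).
  pose (pab := RiemannInt_P23 p0b (conj Ha Hab)).
  rewrite <- (RiemannInt_P26 p0b pb1 p), <- (RiemannInt_P26 p0a pab p0b).
  pose proof (int_lb _ _ _ _ p0a Ha H1).
  pose proof (int_lb _ _ _ _ pab Hab H2).
  pose proof (int_lb _ _ _ _ pb1 Hb H3).
  lra.
Qed.

Lemma Rint01_3u g a b A B C : RI g -> 0 <= a -> a <= b -> b <= 1 ->
  (forall u, 0 < u < a -> g u <= A) -> (forall u, a < u < b -> g u <= B) ->
  (forall u, b < u < 1 -> g u <= C) ->
  Rint01 g <= A * a + B * (b - a) + C * (1 - b).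
Proof.
  intros p Ha Hab Hb H1 H2 H3.
  rewrite (Rint01_spec _ p).
  pose (p0b := RiemannInt_P22 p (conj (Rle_trans _ _ _ Ha Hab) Hb)).
  pose (pb1 := RiemannInt_P23 p (conj (Rle_trans _ _ _ Ha Hab) Hb)).
  pose (p0a := RiemannInt_P22 p0b (conj Ha Hab)).
  pose (pab := RiemannInt_P23 p0b (conj Ha Hab)).
  rewrite <- (RiemannInt_P26 p0b pb1 p), <- (RiemannInt_P26 p0a pab p0b).
  pose proof (int_ub _ _ _ _ p0a Ha H1).
  pose proof (int_ub _ _ _ _ pab Hab H2).
  pose proof (int_ub _ _ _ _ pb1 Hb H3).
  lra.
Qed.

Definition Rnondecr (G : R -> R) := forall x y, x <= y -> G x <= G y.

Lemma RI_comp_up (d : dist) G : Rnondecr G -> RI (fun u => G (qf d u)).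
Proof.
  intros HG. apply mono_int; [lra|]. intros x y H1 H2 H3. apply HG, qf_mono; lra.
Qed.

Lemma RI_comp_down (d : dist) G : Rnondecr (fun y => - G y) -> RI (fun u => G (qf d u)).
Proof.
  intros HG. apply anti_int; [lra|]. intros x y H1 H2 H3. apply (HG (qf d x)), qf_mono; lra.
Qed.

Lemma RI_comp_ud (d : dist) G G1 G2 : Rnondecr G1 -> Rnondecr (fun y => - G2 y) ->
  (forall y, G y = G1 y + G2 y) -> RI (fun u => G (qf d u)).
Proof.
  intros H1 H2 E. apply RI_ext with (fun u => G1 (qf d u) + 1 * G2 (qf d u)).
  apply RI_lin; [apply RI_comp_up | apply RI_comp_down]; auto.
  intros; rewrite E; ring.
Qed.

Definition ind_le (t y : R) : R := if excluded_middle_informative (y <= t) then 1 else 0.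

Lemma Prob_le_eq d (psi : R -> R) t :
  Prob d (fun y => psi y <= t) = Rint01 (fun u => ind_le t (psi (qf d u))).
Proof. reflexivity. Qed.

Lemma Prob_ext d (P P' : R -> Prop) : (forall y, P y <-> P' y) -> Prob d P = Prob d P'.
Proof.
  intros H. unfold Prob, Expect. apply Rint01_ext. intros u.
  destruct (excluded_middle_informative (P (qf d u))), (excluded_middle_informative (P' (qf d u)));
   firstorder.
Qed.

Lemma ind_le_anti t psi : Rnondecr psi -> Rnondecr (fun y => - ind_le t (psi y)).
Proof.
  intros Hp x y Hxy. unfold ind_le.
  pose proof (Hp x y Hxy).
  destruct (excluded_middle_informative (psi x <= t)), (excluded_middle_informative (psi y <= t)); lra.
Qed.

Lemma ind_le_01 t y : 0 <= ind_le t y <= 1.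
Proof. unfold ind_le; destruct excluded_middle_informative; lra. Qed.

Lemma RI_ind d t psi : Rnondecr psi -> RI (fun u => ind_le t (psi (qf d u))).
Proof. intros; apply (RI_comp_down d (fun y => ind_le t (psi y))), ind_le_anti; auto. Qed.

Lemma RI_abs d x psi : Rnondecr psi -> RI (fun u => Rabs (x - psi (qf d u))).
Proof.
  intros Hp. apply (RI_comp_ud d (fun y => Rabs (x - psi y)) (fun y => Rmax (psi y - x) 0)
     (fun y => Rmax (x - psi y) 0)).
  - intros a b Hab. pose proof (Hp a b Hab). unfold Rmax; repeat destruct Rle_dec; lra.
  - intros a b Hab. pose proof (Hp a b Hab). unfold Rmax; repeat destruct Rle_dec; lra.
  - intros y. unfold Rmax, Rabs; repeat destruct Rle_dec; repeat destruct Rcase_abs; lra.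
Qed.

Fixpoint SA (x h : R) (n : nat) (y : R) : R :=
  match n with O => 0 | S k => SA x h k y + h * (1 - ind_le (x + INR k * h) y) end.
Fixpoint SB (x h : R) (n : nat) (y : R) : R :=
  match n with O => 0 | S k => SB x h k y + h * ind_le (x - INR k * h) y end.
Fixpoint EA (x h : R) (P : R -> R) (n : nat) : R :=
  match n with O => 0 | S k => EA x h P k + h * (1 - P (x + INR k * h)) end.
Fixpoint EB (x h : R) (P : R -> R) (n : nat) : R :=
  match n with O => 0 | S k => EB x h P k + h * P (x - INR k * h) end.

Lemma SA_mono x h n : 0 < h -> Rnondecr (SA x h n).
Proof.
  intros Hh. induction n; intros a b Hab; simpl. lra.
  pose proof (IHn a b Hab). pose proof (ind_le_anti (x + INR n * h) (fun y => y) ltac:(intros ? ? ?; auto) a b Hab).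
  simpl in *. nra.
Qed.

Lemma SB_anti x h n : 0 < h -> Rnondecr (fun y => - SB x h n y).
Proof.
  intros Hh. induction n; intros a b Hab; simpl. lra.
  pose proof (IHn a b Hab). pose proof (ind_le_anti (x - INR n * h) (fun y => y) ltac:(intros ? ? ?; auto) a b Hab).
  simpl in *. nra.
Qed.

Lemma comp_nondecr (G psi : R -> R) : Rnondecr G -> Rnondecr psi -> Rnondecr (fun y => G (psi y)).
Proof. intros H1 H2 a b H; apply H1, H2, H. Qed.

Lemma ESA d x h psi n : 0 < h -> Rnondecr psi ->
  Rint01 (fun u => SA x h n (psi (qf d u))) = EA x h (fun t => Prob d (fun y => psi y <= t)) n.
Proof.
  intros Hh Hp. induction n; simpl.
  - apply Rint01_const.
  - rewrite <- IHn. rewrite Rint01_lin.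
    + f_equal. f_equal. rewrite Prob_le_eq.
      transitivity (Rint01 (fun u => 1 + (-1) * ind_le (x + INR n * h) (psi (qf d u)))).
      apply Rint01_ext; intros; ring.
      rewrite Rint01_lin. rewrite Rint01_const. ring. apply RI_const. apply RI_ind; auto.
    + apply (RI_comp_up d (fun y => SA x h n (psi y))), comp_nondecr; auto. apply SA_mono; auto.
    + apply RI_ext with (fun u => 1 + (-1) * ind_le (x + INR n * h) (psi (qf d u))).
      apply RI_lin; [apply RI_const | apply RI_ind; auto]. intros; ring.
Qed.

Lemma ESB d x h psi n : 0 < h -> Rnondecr psi ->
  Rint01 (fun u => SB x h n (psi (qf d u))) = EB x h (fun t => Prob d (fun y => psi y <= t)) n.
Proof.
  intros Hh Hp. induction n; simpl.
  - apply Rint01_const.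
  - rewrite <- IHn. rewrite Rint01_lin.
    + reflexivity.
    + apply (RI_comp_down d (fun y => SB x h n (psi y))).
      intros a b Hab. apply (SB_anti x h n Hh); auto.
    + apply RI_ind; auto.
Qed.

Lemma SA_bounds x h y n : 0 < h ->
  0 <= SA x h n y /\ SA x h n y <= INR n * h /\ (y <= x -> SA x h n y = 0) /\
  (x < y -> SA x h n y <= y - x + h) /\ (Rmin (y - x) (INR n * h) <= SA x h n y).
Proof.
  intros Hh. induction n as [|n IH]; cbn [SA SB].
  - simpl INR. split; [lra|split;[lra|split;[intros; lra|split;[intros;lra|]]]].
    unfold Rmin; destruct Rle_dec; lra.
  - destruct IH as [I1 [I2 [I3 [I4 I5]]]]. rewrite S_INR.
    assert (0 <= INR n) by apply pos_INR.
    unfold ind_le; destruct (excluded_middle_informative (y <= x + INR n * h)) as [Hy|Hy].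
    + split; [nra|split;[nra|split;[|split]]].
      * intros Hyx. rewrite I3 by auto. ring.
      * intros; nra.
      * unfold Rmin in *. destruct (Rle_dec (y - x) (INR n * h)); destruct (Rle_dec (y - x) ((INR n + 1) * h)); nra.
    + split; [nra|split;[nra|split;[|split]]].
      * intros Hyx. exfalso. nra.
      * intros; nra.
      * unfold Rmin in *. destruct (Rle_dec (y - x) (INR n * h)); destruct (Rle_dec (y - x) ((INR n + 1) * h)); nra.
Qed.

Lemma SB_bounds x h y n : 0 < h ->
  0 <= SB x h n y /\ SB x h n y <= INR n * h /\ (x < y -> SB x h n y = 0) /\
  (y <= x -> SB x h n y <= x - y + h) /\ (Rmin (x - y) (INR n * h) <= SB x h n y).
Proof.
  intros Hh. induction n as [|n IH]; cbn [SA SB].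
  - simpl INR. split; [lra|split;[lra|split;[intros; lra|split;[intros;lra|]]]].
    unfold Rmin; destruct Rle_dec; lra.
  - destruct IH as [I1 [I2 [I3 [I4 I5]]]]. rewrite S_INR.
    assert (0 <= INR n) by apply pos_INR.
    unfold ind_le; destruct (excluded_middle_informative (y <= x - INR n * h)) as [Hy|Hy].
    + split; [nra|split;[nra|split;[|split]]].
      * intros Hyx. exfalso. nra.
      * intros; nra.
      * unfold Rmin in *. destruct (Rle_dec (x - y) (INR n * h)); destruct (Rle_dec (x - y) ((INR n + 1) * h)); nra.
    + split; [nra|split;[nra|split;[|split]]].
      * intros Hyx. rewrite I3 by auto. ring.
      * intros; nra.
      * unfold Rmin in *. destruct (Rle_dec (x - y) (INR n * h)); destruct (Rle_dec (x - y) ((INR n + 1) * h)); nra.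
Qed.

Lemma S_sandwich x h y n : 0 < h -> Rabs (x - y) <= INR n * h ->
  Rabs (x - y) <= SA x h n y + SB x h n y <= Rabs (x - y) + h.
Proof.
  intros Hh Hn.
  destruct (SA_bounds x h y n Hh) as [A1 [A2 [A3 [A4 A5]]]].
  destruct (SB_bounds x h y n Hh) as [B1 [B2 [B3 [B4 B5]]]].
  destruct (Rle_dec y x).
  - rewrite A3 by auto. rewrite Rabs_right in * by lra.
    unfold Rmin in B5; destruct Rle_dec in B5; lra.
  - rewrite B3 by lra. rewrite Rabs_left in * by lra.
    unfold Rmin in A5; destruct Rle_dec in A5; lra.
Qed.

Lemma le_eps a b : (forall h, 0 < h -> a <= b + h) -> a <= b.
Proof.
  intros H. destruct (Rle_dec a b); auto. exfalso.
  specialize (H ((a - b) / 2) ltac:(lra)). lra.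
Qed.

Lemma qf_range (d : dist) (psi : R -> R) u : Rnondecr psi -> 0 <= u <= 1 ->
  psi (qf d 0) <= psi (qf d u) <= psi (qf d 1).
Proof.
  intros Hp Hu. split; apply Hp, qf_mono; lra.
Qed.

Lemma transfer (d1 d2 : dist) (phi : R -> R) (x : R) : Rnondecr phi ->
  (forall t, Prob d1 (fun y => y <= t) = Prob d2 (fun y => phi y <= t)) ->
  agent_cost x d1 <= Expect d2 (fun y => Rabs (x - phi y)).
Proof.
  intros Hphi HP.
  assert (Hid : Rnondecr (fun y => y)) by (intros a b H; exact H).
  apply le_eps. intros h Hh.
  set (M := Rabs (x - qf d1 0) + Rabs (x - qf d1 1) + Rabs (x - phi (qf d2 0)) + Rabs (x - phi (qf d2 1))).
  destruct (INR_archimed h M Hh) as [N HN].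
  assert (HM1 : forall u, 0 <= u <= 1 -> Rabs (x - qf d1 u) <= INR N * h).
  { intros u Hu. pose proof (qf_range d1 (fun y => y) u Hid Hu). simpl in *.
    assert (Rabs (x - qf d1 u) <= Rabs (x - qf d1 0) + Rabs (x - qf d1 1)).
    { unfold Rabs; repeat destruct Rcase_abs; lra. }
    assert (0 <= Rabs (x - phi (qf d2 0)) + Rabs (x - phi (qf d2 1))) by (pose proof (Rabs_pos (x - phi (qf d2 0))); pose proof (Rabs_pos (x - phi (qf d2 1))); lra).
    unfold M in HN. lra. }
  assert (HM2 : forall u, 0 <= u <= 1 -> Rabs (x - phi (qf d2 u)) <= INR N * h).
  { intros u Hu. pose proof (qf_range d2 phi u Hphi Hu). simpl in *.
    assert (Rabs (x - phi (qf d2 u)) <= Rabs (x - phi (qf d2 0)) + Rabs (x - phi (qf d2 1))).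
    { unfold Rabs; repeat destruct Rcase_abs; lra. }
    assert (0 <= Rabs (x - qf d1 0) + Rabs (x - qf d1 1)) by (pose proof (Rabs_pos (x - qf d1 0)); pose proof (Rabs_pos (x - qf d1 1)); lra).
    unfold M in HN. lra. }
  assert (RA1 : RI (fun u => SA x h N (qf d1 u))) by (apply (RI_comp_up d1 (SA x h N)), SA_mono; auto).
  assert (RB1 : RI (fun u => SB x h N (qf d1 u))) by (apply (RI_comp_down d1 (SB x h N)), SB_anti; auto).
  assert (RA2 : RI (fun u => SA x h N (phi (qf d2 u)))) by (apply (RI_comp_up d2 (fun y => SA x h N (phi y))), comp_nondecr; auto; apply SA_mono; auto).
  assert (RB2 : RI (fun u => SB x h N (phi (qf d2 u)))).
  { apply (RI_comp_down d2 (fun y => SB x h N (phi y))). intros a b Hab. apply (SB_anti x h N Hh), Hphi, Hab. }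
  assert (Efun : (fun t => Prob d1 (fun y => y <= t)) = (fun t => Prob d2 (fun y => phi y <= t))).
  { extensionality t. apply HP. }
  unfold agent_cost, Expect.
  apply Rle_trans with (Rint01 (fun u => SA x h N (qf d1 u) + 1 * SB x h N (qf d1 u))).
  { apply Rint01_le. apply (RI_abs d1 x (fun y => y)); auto. apply RI_lin; auto.
    intros u Hu. pose proof (S_sandwich x h (qf d1 u) N Hh (HM1 u ltac:(lra))). lra. }
  rewrite Rint01_lin by auto.
  rewrite (ESA d1 x h (fun y => y) N Hh Hid), (ESB d1 x h (fun y => y) N Hh Hid), Efun.
  rewrite <- (ESA d2 x h phi N Hh Hphi), <- (ESB d2 x h phi N Hh Hphi).
  rewrite <- Rint01_lin by auto.
  assert (Eh : Rint01 (fun u => Rabs (x - phi (qf d2 u)) + h * (fun _ => 1) u) =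
               Rint01 (fun u => Rabs (x - phi (qf d2 u))) + h).
  { rewrite Rint01_lin. rewrite Rint01_const. ring. apply (RI_abs d2 x phi); auto. apply RI_const. }
  rewrite <- Eh.
  apply Rint01_le. apply RI_lin; auto. apply RI_lin. apply (RI_abs d2 x phi); auto. apply RI_const.
  intros u Hu. pose proof (S_sandwich x h (phi (qf d2 u)) N Hh (HM2 u ltac:(lra))). lra.
Qed.

Lemma rpow_nonneg a b : 0 <= rpow a b.
Proof. unfold rpow; destruct Rle_dec. lra. unfold Rpower; left; apply exp_pos. Qed.

Lemma rpow_pos a b : 0 < a -> rpow a b = Rpower a b.
Proof. intros; unfold rpow; destruct Rle_dec; [lra|reflexivity]. Qed.

Lemma rpow_0 b : rpow 0 b = 0.
Proof. unfold rpow; destruct Rle_dec; [reflexivity|lra]. Qed.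

Lemma rpow_mono a b e : 0 <= a <= b -> 0 <= e -> rpow a e <= rpow b e.
Proof.
  intros Hab He. destruct (Req_dec a 0) as [->|Ha].
  - rewrite rpow_0; apply rpow_nonneg.
  - rewrite !rpow_pos by lra. apply Rle_Rpower_l; lra.
Qed.

Lemma rpow_le_self t p : 0 <= t <= 1 -> 1 <= p -> rpow t p <= t.
Proof.
  intros Ht Hp. destruct (Req_dec t 0) as [->|Ht0]. rewrite rpow_0; lra.
  rewrite rpow_pos by lra. unfold Rpower.
  rewrite <- (exp_ln t) at 2 by lra.
  destruct (Req_dec t 1) as [->|Ht1]. rewrite ln_1. rewrite Rmult_0_r. lra.
  assert (ln t < 0). { rewrite <- ln_1. apply ln_increasing; lra. }
  destruct (Rle_lt_or_eq_dec _ _ Hp) as [Hp'|Hp']. 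
  - left. apply exp_increasing. nra.
  - subst. rewrite Rmult_1_l. lra.
Qed.

Lemma rpow_inv b p : 0 <= b -> 0 < p -> rpow (rpow b p) (1 / p) = b.
Proof.
  intros Hb Hp. destruct (Req_dec b 0) as [->|Hb0]. rewrite !rpow_0; reflexivity.
  rewrite (rpow_pos b) by lra. rewrite rpow_pos by (unfold Rpower; apply exp_pos).
  rewrite Rpower_mult. replace (p * (1 / p)) with 1 by (field; lra).
  apply Rpower_1; lra.
Qed.

Lemma rpow_1 p : rpow 1 p = 1.
Proof. rewrite rpow_pos by lra. unfold Rpower. rewrite ln_1, Rmult_0_r. apply exp_0. Qed.

Definition GG (p y : R) := rpow (Rabs y) p + rpow (Rabs (1 - y)) p.
Definition gg (p y : R) := rpow (GG p y) (1 / p).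

Lemma sc_det_gg p y : sc_det p 0 1 y = gg p y.
Proof. unfold sc_det, lpnorm, gg, GG. rewrite Rminus_0_l, Rabs_Ropp. reflexivity. Qed.

Lemma GG_nonneg p y : 0 <= GG p y.
Proof. unfold GG. pose proof (rpow_nonneg (Rabs y) p). pose proof (rpow_nonneg (Rabs (1 - y)) p). lra. Qed.

Lemma GG_sym p y : GG p (1 - y) = GG p y.
Proof. unfold GG. replace (1 - (1 - y)) with y by ring. ring. Qed.

Lemma GG_0 p : GG p 0 = 1.
Proof. unfold GG. rewrite Rabs_R0, Rminus_0_r, Rabs_R1, rpow_0, rpow_1. ring. Qed.

Lemma GG_mid_le1 p y : 1 <= p -> 0 <= y <= 1 -> GG p y <= 1.
Proof.
  intros Hp Hy. unfold GG. rewrite !Rabs_right by lra.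
  pose proof (rpow_le_self y p ltac:(lra) Hp). pose proof (rpow_le_self (1 - y) p ltac:(lra) Hp). lra.
Qed.

Lemma GG_neg_anti p y y' : 1 <= p -> y <= y' -> y' <= 0 -> GG p y' <= GG p y.
Proof.
  intros Hp H1 H2. unfold GG.
  rewrite (Rabs_left1 y), (Rabs_left1 y') by lra. rewrite (Rabs_right (1 - y)), (Rabs_right (1 - y')) by lra.
  pose proof (rpow_mono (- y') (- y) p ltac:(lra) ltac:(lra)).
  pose proof (rpow_mono (1 - y') (1 - y) p ltac:(lra) ltac:(lra)). lra.
Qed.

Lemma GG_mvt p y y' : 1 <= p -> 0 < y -> y < y' -> y' <= 1/2 -> GG p y' <= GG p y.
Proof.
  intros Hp H1 H2 H3.
  set (f := fun s => Rpower s p + Rpower (1 - s) p).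
  set (f' := fun s => p * Rpower s (p - 1) + p * Rpower (1 - s) (p - 1) * (-1)).
  assert (Hd : forall c, y <= c <= y' -> derivable_pt_lim f c (f' c)).
  { intros c Hc. unfold f, f'.
    apply (derivable_pt_lim_plus (fun s => Rpower s p) (fun s => Rpower (1 - s) p)).
    - apply derivable_pt_lim_power; lra.
    - apply (derivable_pt_lim_comp (fun s => 1 - s) (fun x => Rpower x p)).
      + replace (-1) with (0 - 1) by ring.
        apply (derivable_pt_lim_minus (fct_cte 1) id). apply derivable_pt_lim_const. apply derivable_pt_lim_id.
      + apply derivable_pt_lim_power; lra. }
  destruct (MVT_cor2 f f' y y' H2 Hd) as [c [Hc1 Hc2]].
  assert (Hf : forall s, 0 < s <= 1/2 -> GG p s = f s).
  { intros s Hs. unfold GG, f. rewrite !Rabs_right by lra. rewrite !rpow_pos by lra. reflexivity. }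
  rewrite !Hf by lra.
  assert (f' c <= 0).
  { unfold f'. assert (Rpower c (p - 1) <= Rpower (1 - c) (p - 1)) by (apply Rle_Rpower_l; lra). nra. }
  nra.
Qed.

Lemma GG_left_anti p y y' : 1 <= p -> y <= y' -> y' <= 1/2 -> GG p y' <= GG p y.
Proof.
  intros Hp H1 H2.
  destruct (Rle_dec y' 0).
  - apply GG_neg_anti; auto.
  - destruct (Rle_dec y 0).
    + apply Rle_trans with 1. apply GG_mid_le1; lra.
      rewrite <- (GG_0 p). apply GG_neg_anti; lra.
    + destruct (Req_dec y y') as [->|Hne]. lra.
      apply GG_mvt; lra.
Qed.

Lemma GG_right_mono p y y' : 1 <= p -> 1/2 <= y -> y <= y' -> GG p y <= GG p y'.
Proof.
  intros Hp H1 H2. rewrite <- (GG_sym p y), <- (GG_sym p y'). apply GG_left_anti; lra.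
Qed.

Lemma gg_left_anti p y y' : 1 <= p -> y <= y' -> y' <= 1/2 -> gg p y' <= gg p y.
Proof.
  intros. unfold gg. apply rpow_mono. split. apply GG_nonneg. apply GG_left_anti; auto.
  unfold Rdiv. rewrite Rmult_1_l. left; apply Rinv_0_lt_compat; lra.
Qed.

Lemma gg_right_mono p y y' : 1 <= p -> 1/2 <= y -> y <= y' -> gg p y <= gg p y'.
Proof.
  intros. unfold gg. apply rpow_mono. split. apply GG_nonneg. apply GG_right_mono; auto.
  unfold Rdiv. rewrite Rmult_1_l. left; apply Rinv_0_lt_compat; lra.
Qed.

Lemma gg_min p z : 1 <= p -> gg p (1/2) <= gg p z.
Proof.
  intros Hp. destruct (Rle_dec z (1/2)).
  - apply gg_left_anti; lra.
  - apply gg_right_mono; lra.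
Qed.

Lemma gg_ge1 p y : 1 <= p -> (y <= 0 \/ 1 <= y) -> 1 <= gg p y.
Proof.
  intros Hp Hy. unfold gg, GG.
  assert (Hp' : 0 <= 1 / p) by (unfold Rdiv; rewrite Rmult_1_l; left; apply Rinv_0_lt_compat; lra).
  destruct Hy as [Hy|Hy].
    apply Rle_trans with (Rabs (1 - y)). rewrite Rabs_right by lra. lra.
    rewrite <- (rpow_inv (Rabs (1 - y)) p) at 1 by (try apply Rabs_pos; lra).
    apply rpow_mono; auto. split. apply rpow_nonneg. pose proof (rpow_nonneg (Rabs y) p). lra.
  - apply Rle_trans with (Rabs y). rewrite Rabs_right by lra. lra.
    rewrite <- (rpow_inv (Rabs y) p) at 1 by (try apply Rabs_pos; lra).
    apply rpow_mono; auto. split. apply rpow_nonneg. pose proof (rpow_nonneg (Rabs (1 - y)) p). lra.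
Qed.

Lemma gg_half p : 1 <= p -> gg p (1/2) * Rpower 2 (1 - 1 / p) = 1.
Proof.
  intros Hp. unfold gg, GG. replace (1 - 1/2) with (1/2) by field.
  rewrite Rabs_right by lra. rewrite (rpow_pos (1/2) p) by lra.
  assert (Hpos : 0 < Rpower (1/2) p + Rpower (1/2) p) by (unfold Rpower; pose proof (exp_pos (p * ln (1/2))); lra).
  rewrite rpow_pos by auto.
  unfold Rpower. rewrite <- exp_plus.
  replace (exp (p * ln (1 / 2)) + exp (p * ln (1 / 2))) with (2 * exp (p * ln (1 / 2))) by ring.
  rewrite ln_mult by (try lra; apply exp_pos). rewrite ln_exp.
  replace (1/2) with (/2) by field. rewrite ln_Rinv by lra.
  replace (1 / p * (ln 2 + p * - ln 2) + (1 - 1 / p) * ln 2) with 0 by (field; lra).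
  apply exp_0.
Qed.

Lemma gg_pos p y : 0 < gg p y.
Proof.
  unfold gg. assert (0 < GG p y).
  { unfold GG. destruct (Req_dec y 0) as [->|Hy].
    - rewrite Rminus_0_r, Rabs_R1, rpow_1. pose proof (rpow_nonneg (Rabs 0) p). lra.
    - rewrite (rpow_pos (Rabs y)) by (apply Rabs_pos_lt; auto). unfold Rpower.
      pose proof (exp_pos (p * ln (Rabs y))). pose proof (rpow_nonneg (Rabs (1 - y)) p). lra. }
  rewrite rpow_pos by auto. apply exp_pos.
Qed.

Definition ind_ge (t y : R) : R := if excluded_middle_informative (t <= y) then 1 else 0.

Lemma Prob_ge_eq d t : Prob d (fun y => t <= y) = Rint01 (fun u => ind_ge t (qf d u)).
Proof. reflexivity. Qed.

Lemma RI_ind_ge d t : RI (fun u => ind_ge t (qf d u)).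
Proof.
  apply (RI_comp_up d (ind_ge t)). intros a b H. unfold ind_ge.
  destruct (excluded_middle_informative (t <= a)), (excluded_middle_informative (t <= b)); lra.
Qed.

Lemma RI_ind_le d t : RI (fun u => ind_le t (qf d u)).
Proof. apply (RI_ind d t (fun y => y)). intros a b H; exact H. Qed.

Lemma RI_id d : RI (fun u => qf d u).
Proof. apply (RI_comp_up d (fun y => y)). intros a b H; exact H. Qed.

Lemma support_pts d a b : a <= b -> Prob d (fun y => a <= y <= b) = 1 ->
  forall u, 0 < u < 1 -> a <= qf d u <= b.
Proof.
  intros Hab HP u Hu.
  set (I := fun y => if excluded_middle_informative (a <= y <= b) then 1 else 0).
  assert (RIi : RI (fun w => I (qf d w))).
  { apply (RI_comp_ud d I (fun y => - (if excluded_middle_informative (y < a) then 1 else 0)) (ind_le b)).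
    - intros x y H. destruct (excluded_middle_informative (x < a)), (excluded_middle_informative (y < a)); lra.
    - apply (ind_le_anti b (fun y => y)). intros x y H; exact H.
    - intros y. unfold I, ind_le.
      destruct (excluded_middle_informative (a <= y <= b)), (excluded_middle_informative (y < a)),
        (excluded_middle_informative (y <= b)); lra. }
  assert (HI : Rint01 (fun w => I (qf d w)) = 1) by exact HP.
  assert (I01 : forall y, I y <= 1) by (intros y; unfold I; destruct excluded_middle_informative; lra).
  split.
  - destruct (Rle_dec a (qf d u)) as [|Hn]; auto. exfalso.
    assert (Rint01 (fun w => I (qf d w)) <= 0 * u + 0 * (u - u) + 1 * (1 - u)).
    { apply Rint01_3u; auto; try lra.
      - intros w Hw. assert (qf d w <= qf d u) by (apply qf_mono; lra).
        unfold I. destruct excluded_middle_informative; lra.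
      - intros w Hw; lra. }
    lra.
  - destruct (Rle_dec (qf d u) b) as [|Hn]; auto. exfalso.
    assert (Rint01 (fun w => I (qf d w)) <= 1 * u + 0 * (u - u) + 0 * (1 - u)).
    { apply Rint01_3u; auto; try lra.
      - intros w Hw; lra.
      - intros w Hw. assert (qf d u <= qf d w) by (apply qf_mono; lra).
        unfold I. destruct excluded_middle_informative; lra. }
    lra.
Qed.

Lemma Rint01_lb g A : RI g -> (forall u, 0 < u < 1 -> A <= g u) -> A <= Rint01 g.
Proof.
  intros p H. rewrite <- (Rint01_const A). apply Rint01_le; auto. apply RI_const.
Qed.

Lemma RI_gg d p : 1 <= p -> RI (fun u => gg p (qf d u)).
Proof.
  intros Hp.
  apply (RI_comp_ud d (gg p) (fun y => gg p (Rmax y (1/2))) (fun y => gg p (Rmin y (1/2)) - gg p (1/2))).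
  - intros x y H. apply gg_right_mono; auto. apply Rmax_r. unfold Rmax; repeat destruct Rle_dec; lra.
  - intros x y H. assert (gg p (Rmin y (1/2)) <= gg p (Rmin x (1/2))).
    { apply gg_left_anti; auto. unfold Rmin; repeat destruct Rle_dec; lra. apply Rmin_r. }
    lra.
  - intros y. unfold Rmax, Rmin. destruct (Rle_dec y (1/2)); destruct (Rle_dec (1/2) y).
    + replace y with (1/2) by lra. ring.
    + ring.
    + ring.
    + lra.
Qed.

Theorem mainTheorem14 (p : R) (hp : 1 <= p) (f : mechanism) :
  strategyproof f ->
  shift_scale_invariant f ->
  symmetric f ->
  (forall x1 x2, Prob (f x1 x2) (fun y => Rmin x1 x2 <= y <= Rmax x1 x2) = 1) ->
  approx_ratio_ge p f ((Rpower 2 (1 - 1 / p) + 1) / 2).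
Proof.
  intros [SP1 SP2] SSI SYM SUP c' Hc'. exists 0, 1.
  set (d := f 0 1).
  assert (Sup : forall u, 0 < u < 1 -> 0 <= qf d u <= 1).
  { apply support_pts. lra. specialize (SUP 0 1).
    rewrite Rmin_left, Rmax_right in SUP by lra. exact SUP. }
  assert (SymE : forall s, Prob d (fun z => 1 - s <= z) = Prob d (fun z => z <= s)).
  { intros s. specialize (SYM 0 1 (1/2 - s)).
    rewrite (Prob_ext _ _ (fun z => 1 - s <= z)) in SYM by (intros y; split; intros; lra).
    rewrite (Prob_ext _ (fun z => z <= (0 + 1) / 2 - (1 / 2 - s)) (fun z => z <= s)) in SYM by (intros y; split; intros; lra).
    exact SYM. }
  set (m := Rint01 (fun u => qf d u)).
  assert (Key : forall e, 0 < e <= 1 -> 1 <= 4 * Prob d (fun y => y <= e)).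
  { intros e He. set (c := 1 + e).
    assert (Hc : 0 < c) by (unfold c; lra).
    assert (Dsc : forall t, Prob (f 0 c) (fun y => y <= t) = Prob d (fun y => c * y <= t)).
    { destruct (SSI 0 1 c ltac:(lra)) as [_ [H _]]. specialize (H ltac:(lra)).
      rewrite Rmult_0_r, Rmult_1_r in H. exact H. }
    assert (Dsh : forall t, Prob (f (-e) 1) (fun y => y <= t) = Prob d (fun y => c * y - e <= t)).
    { intros t. destruct (SSI 0 c (-e) ltac:(lra)) as [H _].
      replace (0 + - e) with (- e) in H by ring. replace (c + - e) with 1 in H by (unfold c; ring).
      rewrite H. rewrite (Prob_ext _ _ (fun y => y <= t + e)) by (intros y; split; intros; lra).
      rewrite Dsc. apply Prob_ext. intros y; split; intros; lra. }
    set (P := Prob d (fun y => y <= e)).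
    assert (HP' : Prob d (fun y => 1 - e <= y) = P) by apply SymE.
    assert (A2 : m <= 2 * P).
    { pose proof (SP2 0 1 c) as H.
      pose proof (transfer (f 0 c) d (fun y => c * y) 1 ltac:(intros a b Hab; nra) Dsc) as T.
      assert (L : 1 - m <= agent_cost 1 (f 0 1)).
      { unfold agent_cost, Expect. fold d.
        transitivity (Rint01 (fun u => 1 + (-1) * qf d u)).
        - rewrite Rint01_lin, Rint01_const. change (Rint01 (qf d)) with m in *; lra. apply RI_const. apply RI_id.
        - apply Rint01_le. apply RI_lin. apply RI_const. apply RI_id.
          apply (RI_abs d 1 (fun y => y)). intros a b Hab; exact Hab.
          intros u Hu. unfold Rabs; destruct Rcase_abs; lra. }
      assert (U : Expect d (fun y => Rabs (1 - c * y)) <= 1 - c * m + 2 * e * P).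
      { unfold Expect. rewrite <- HP'. rewrite Prob_ge_eq.
        transitivity (Rint01 (fun u => (1 + (- c) * qf d u) + (2 * e) * ind_ge (1 - e) (qf d u))).
        - apply Rint01_le. apply (RI_abs d 1 (fun y => c * y)). intros a b Hab; nra.
          apply RI_lin. apply RI_lin. apply RI_const. apply RI_id. apply RI_ind_ge.
          intros u Hu. specialize (Sup u Hu). unfold ind_ge.
          destruct (excluded_middle_informative (1 - e <= qf d u)).
          + unfold Rabs; destruct Rcase_abs; unfold c in *; nra.
          + assert (c * qf d u <= 1) by (unfold c; nra).
            unfold Rabs; destruct Rcase_abs; lra.
        - rewrite Rint01_lin, Rint01_lin, Rint01_const. change (Rint01 (qf d)) with m in *; lra.
          apply RI_const. apply RI_id. apply RI_lin. apply RI_const. apply RI_id. apply RI_ind_ge. }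
      assert (1 - m <= 1 - c * m + 2 * e * P) by lra.
      unfold c in *. nra. }
    assert (A1 : 1 <= m + 2 * P).
    { pose proof (SP1 0 1 (-e)) as H.
      pose proof (transfer (f (-e) 1) d (fun y => c * y - e) 0 ltac:(intros a b Hab; nra) Dsh) as T.
      assert (L : m <= agent_cost 0 (f 0 1)).
      { unfold agent_cost, Expect. fold d. unfold m.
        apply Rint01_le. apply RI_id.
          apply (RI_abs d 0 (fun y => y)). intros a b Hab; exact Hab.
          intros u Hu. unfold Rabs; destruct Rcase_abs; lra. }
      assert (U : Expect d (fun y => Rabs (0 - (c * y - e))) <= - e + c * m + 2 * e * P).
      { unfold Expect, P. rewrite Prob_le_eq.
        transitivity (Rint01 (fun u => (- e + c * qf d u) + (2 * e) * ind_le e (qf d u))).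
        - apply Rint01_le. apply (RI_abs d 0 (fun y => c * y - e)). intros a b Hab; nra.
          apply RI_lin. apply RI_lin. apply RI_const. apply RI_id. apply RI_ind_le.
          intros u Hu. specialize (Sup u Hu). unfold ind_le.
          destruct (excluded_middle_informative (qf d u <= e)).
          + unfold Rabs; destruct Rcase_abs; unfold c in *; nra.
          + assert (e <= c * qf d u) by (unfold c; nra).
            unfold Rabs; destruct Rcase_abs; lra.
        - rewrite Rint01_lin, Rint01_lin, Rint01_const. change (Rint01 (qf d)) with m in *; lra.
          apply RI_const. apply RI_id. apply RI_lin. apply RI_const. apply RI_id. apply RI_ind_le. }
      assert (m <= - e + c * m + 2 * e * P) by lra.
      unfold c in *. nra. }
    lra. }
  assert (Low : forall u, 0 < u < 1/4 -> qf d u <= 0).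
  { intros u Hu. destruct (Rle_dec (qf d u) 0) as [|Hn]; auto. exfalso.
    set (e := Rmin (qf d u / 2) 1).
    assert (He : 0 < e <= 1 /\ e < qf d u) by (unfold e, Rmin; destruct Rle_dec; lra).
    pose proof (Key e (proj1 He)) as K.
    assert (Prob d (fun y => y <= e) <= 1 * u + 0 * (u - u) + 0 * (1 - u)).
    { rewrite Prob_le_eq. apply Rint01_3u; try lra. apply RI_ind_le.
      - intros w Hw. pose proof (ind_le_01 e (qf d w)); lra.
      - intros w Hw. lra.
      - intros w Hw. assert (qf d u <= qf d w) by (apply qf_mono; lra).
        unfold ind_le; destruct excluded_middle_informative; lra. }
    lra. }
  assert (High : forall u, 3/4 < u < 1 -> 1 <= qf d u).
  { intros u Hu. destruct (Rle_dec 1 (qf d u)) as [|Hn]; auto. exfalso.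
    set (e := Rmin ((1 - qf d u) / 2) 1).
    assert (He : 0 < e <= 1 /\ qf d u < 1 - e) by (unfold e, Rmin; destruct Rle_dec; lra).
    pose proof (Key e (proj1 He)) as K. rewrite <- SymE in K.
    assert (Prob d (fun y => 1 - e <= y) <= 0 * u + 0 * (u - u) + 1 * (1 - u)).
    { rewrite Prob_ge_eq. apply Rint01_3u; try lra. apply RI_ind_ge.
      - intros w Hw. assert (qf d w <= qf d u) by (apply qf_mono; lra).
        unfold ind_ge; destruct excluded_middle_informative; lra.
      - intros w Hw. lra.
      - intros w Hw. unfold ind_ge; destruct excluded_middle_informative; lra. }
    lra. }
  assert (Hopt : opt p 0 1 = gg p (1/2)).
  { unfold opt.
    destruct (epsilon_spec (inhabits 0)
      (fun m0 => (exists y, sc_det p 0 1 y = m0) /\ forall z, m0 <= sc_det p 0 1 z)) as [[y0 Hy0] Hmin].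
    { exists (gg p (1/2)). split. exists (1/2). apply sc_det_gg.
      intros z. rewrite sc_det_gg. apply gg_min; auto. }
    apply Rle_antisym.
    - specialize (Hmin (1/2)). rewrite sc_det_gg in Hmin. exact Hmin.
    - rewrite <- Hy0, sc_det_gg. apply gg_min; auto. }
  set (o := gg p (1/2)) in *.
  assert (Ho : 0 < o) by apply gg_pos.
  assert (Hsc : 1/2 + o/2 <= sc p 0 1 (f 0 1)).
  { unfold sc, Expect. fold d.
    rewrite (Rint01_ext _ (fun u => gg p (qf d u))) by (intros; apply sc_det_gg).
    apply Rle_trans with (1 * (1/4) + o * (3/4 - 1/4) + 1 * (1 - 3/4)). lra.
    apply Rint01_3; try lra. apply RI_gg; auto.
    - intros u Hu. apply gg_ge1; [auto|]. left; apply Low; lra.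
    - intros u Hu. apply gg_min; auto.
    - intros u Hu. apply gg_ge1; [auto|]. right; apply High; lra. }
  pose proof (gg_half p hp) as Hh. fold o in Hh.
  unfold ratio_exceeds. cbv zeta. rewrite Hopt.
  destruct (Req_dec_T o 0) as [E|E]. lra.
  set (s := sc p 0 1 (f 0 1)) in *.
  assert (HR : Rpower 2 (1 - 1 / p) = / o) by (field_simplify_eq; [lra|lra]).
  rewrite HR in Hc'.
  apply Rlt_le_trans with ((/ o + 1) / 2); auto.
  unfold Rdiv.
  assert (E1 : (/ o + 1) * / 2 = (1/2 + o/2) / o) by (field; lra).
  rewrite E1. unfold Rdiv. apply Rmult_le_compat_r. left; apply Rinv_0_lt_compat; lra. exact Hsc.
Qed.
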